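(* Let $J'=(z_w,z_w')$ be a nonempty open interval, let $r:J'\to\mathbb{R}$ be differentiable, non-increasing, with $r(z)\neq 0$ and $|r(z)|<1$ for all $z\in J'$, and let $h:J'\to\mathbb{R}$ be differentiable with $\dot h(z)=1+h(z)^2-2r(z)h(z)$ on $J'$, having exactly one zero $z_*\in J'$. Let $G(z)=z-\dfrac{2h(z)}{2+h(z)^2-2r(z)h(z)}$. Then for every initial guess $z_0\in J'$ the iteration $z_{n+1}=G(z_n)$ is well defined and the sequence $(z_n)$ converges monotonically to $z_*$.
   Context: $\dot{}$ denotes differentiation with respect to $z$. ''Converges monotonically'' means all iterates lie in $J'$, the sequence is monotone, and its limit is $z_*$. *)

(* Defs.v *)
From Stdlib Require Import Reals.
Open Scope R_scope.

Definition Gdenom (r h : R -> R) (z : R) : R := 2 + (h z)^2 - 2 * r z * h z.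
Definition Gmap (r h : R -> R) (z : R) : R := z - 2 * h z / Gdenom r h z.

Fixpoint Giter (r h : R -> R) (z0 : R) (n : nat) : R :=
  match n with
  | O => z0
  | S k => Gmap r h (Giter r h z0 k)
  end.

(* Main.v *)
Require Import Defs.
From Stdlib Require Import Reals Lra Psatz Lia FunctionalExtensionality ClassicalEpsilon.
Open Scope R_scope.

Lemma Gmap_eq r h : Gmap r h = (id - (fct_cte 2 * h)/((fct_cte 2 + h*h) - (fct_cte 2 * r)*h))%F.
Proof.
  extensionality z. unfold Gmap, Gdenom, minus_fct, plus_fct, mult_fct, div_fct, fct_cte, id.
  simpl. f_equal. f_equal. ring.
Qed.

Lemma dG r h z hd rd : derivable_pt_lim h z hd -> derivable_pt_lim r z rd -> Gdenom r h z <> 0 ->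
  derivable_pt_lim (Gmap r h) z
   (1 - ((2*hd) * Gdenom r h z - (2*h z*hd - 2*(rd*h z + r z*hd)) * (2*h z)) / (Gdenom r h z)²).
Proof.
  intros Hh Hr HD. rewrite Gmap_eq.
  assert (E : ((fct_cte 2 + h*h) - (fct_cte 2 * r)*h)%F z = Gdenom r h z).
  { unfold Gdenom, minus_fct, plus_fct, mult_fct, fct_cte. simpl. ring. }
  apply derivable_pt_lim_minus. apply derivable_pt_lim_id.
  replace (((2*hd) * Gdenom r h z - (2*h z*hd - 2*(rd*h z + r z*hd)) * (2*h z)) / (Gdenom r h z)²)
   with (((0 * h z + 2 * hd) * ((fct_cte 2 + h*h) - (fct_cte 2 * r)*h)%F z
          - ((0 + (hd * h z + h z * hd)) - ((0 * r z + 2 * rd) * h z + (2 * r z) * hd)) * (fct_cte 2 * h)%F z)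
          / (((fct_cte 2 + h*h) - (fct_cte 2 * r)*h)%F z)²).
  2:{ rewrite E. unfold mult_fct, fct_cte. f_equal. ring. }
  apply derivable_pt_lim_div.
  - apply derivable_pt_lim_mult. apply derivable_pt_lim_const. exact Hh.
  - apply derivable_pt_lim_minus. apply derivable_pt_lim_plus. apply derivable_pt_lim_const.
    apply derivable_pt_lim_mult; exact Hh.
    apply (derivable_pt_lim_mult (fct_cte 2 * r)%F h z (0 * r z + 2 * rd) hd). apply (derivable_pt_lim_mult (fct_cte 2) r z 0 rd). apply derivable_pt_lim_const. exact Hr. exact Hh.
  - rewrite E. exact HD.
Qed.

Lemma rd_nonpos (zw zw' : R) (r : R -> R) z l :
  (forall x y, zw < x < zw' -> zw < y < zw' -> x <= y -> r y <= r x) ->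
  zw < z < zw' -> derivable_pt_lim r z l -> l <= 0.
Proof.
  intros Hdec Hz Hl. destruct (Rle_lt_dec l 0) as [|Hpos]; [assumption|exfalso].
  destruct (Hl l Hpos) as [[d Hd] Hdl]. simpl in Hdl.
  set (e := Rmin (d/2) ((zw' - z)/2)).
  assert (He : 0 < e) by (unfold e; apply Rmin_glb_lt; lra).
  assert (He1 : e <= d/2) by apply Rmin_l.
  assert (He2 : e <= (zw'-z)/2) by apply Rmin_r.
  assert (Ha := Hdl e ltac:(lra) ltac:(rewrite Rabs_right; lra)).
  assert (Hle : r (z+e) <= r z) by (apply Hdec; lra).
  assert (Hq : (r (z+e) - r z)/e <= 0).
  { unfold Rdiv. assert (0 < / e) by (apply Rinv_0_lt_compat; lra). nra. }
  apply Rabs_def2 in Ha. lra.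
Qed.

Lemma cv_const c : Un_cv (fun _ => c) c.
Proof. intros eps He. exists 0%nat. intros. unfold Rdist. rewrite Rminus_diag, Rabs_R0. lra. Qed.

Lemma quad_pos (a b : R) : -1 < b < 1 -> 0 < 1 + a^2 - 2 * b * a.
Proof. intros. assert (H1 := Rle_0_sqr (a - b)). unfold Rsqr in H1. nra. Qed.

Theorem mainTheorem4 (zw zw' : R) (r h : R -> R) (zs : R) :
  zw < zw' ->
  (forall z, zw < z < zw' -> exists l, derivable_pt_lim r z l) ->
  (forall x y, zw < x < zw' -> zw < y < zw' -> x <= y -> r y <= r x) ->
  (forall z, zw < z < zw' -> r z <> 0 /\ Rabs (r z) < 1) ->
  (forall z, zw < z < zw' ->
     derivable_pt_lim h z (1 + (h z)^2 - 2 * r z * h z)) ->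
  zw < zs < zw' -> h zs = 0 ->
  (forall z, zw < z < zw' -> h z = 0 -> z = zs) ->
  forall z0, zw < z0 < zw' ->
    (forall n, zw < Giter r h z0 n < zw' /\ Gdenom r h (Giter r h z0 n) <> 0) /\
    (Un_growing (Giter r h z0) \/ Un_decreasing (Giter r h z0)) /\
    Un_cv (Giter r h z0) zs.
Proof.
  intros Hw Hr Hdec Hr1 Hh Hzs Hhzs Huniq z0 Hz0.
  assert (Hrb : forall z, zw < z < zw' -> -1 < r z < 1).
  { intros z Hz. destruct (Hr1 z Hz) as [_ Ha]. apply Rabs_def2 in Ha. lra. }
  assert (HD : forall z, zw < z < zw' -> 1 < Gdenom r h z).
  { intros z Hz. specialize (Hrb z Hz). unfold Gdenom. assert (0 <= (h z - r z) * (h z - r z)) by (apply Rle_0_sqr). assert (0 < (1 - r z) * (1 + r z)) by (apply Rmult_lt_0_compat; lra). simpl. nra. }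
  assert (Hex : forall c, exists l, zw < c < zw' -> derivable_pt_lim r c l).
  { intros c. destruct (Rlt_dec zw c) as [H1|H1]; [destruct (Rlt_dec c zw') as [H2|H2]|].
    - destruct (Hr c (conj H1 H2)) as [l Hl]. exists l. intros; exact Hl.
    - exists 0. intros [_ ?]; contradiction.
    - exists 0. intros [? _]; contradiction. }
  set (rd := fun c => proj1_sig (constructive_indefinite_description _ (Hex c))).
  assert (Hrd : forall c, zw < c < zw' -> derivable_pt_lim r c (rd c)).
  { intros c Hc. unfold rd. destruct (constructive_indefinite_description _ (Hex c)) as [l Hl].
    simpl. exact (Hl Hc). }
  set (hd := fun c => 1 + (h c)^2 - 2 * r c * h c).
  set (Gd := fun c => 1 - ((2*hd c) * Gdenom r h c - (2*h c*hd c - 2*(rd c*h c + r c*hd c)) * (2*h c)) / (Gdenom r h c)²).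
  assert (HGd : forall c, zw < c < zw' -> derivable_pt_lim (Gmap r h) c (Gd c)).
  { intros c Hc. apply dG. apply Hh; exact Hc. apply Hrd; exact Hc.
    specialize (HD c Hc). lra. }
  assert (HGd0 : forall c, zw < c < zw' -> 0 <= Gd c).
  { intros c Hc. unfold Gd.
    assert (Hrdc := rd_nonpos zw zw' r c (rd c) Hdec Hc (Hrd c Hc)).
    specialize (HD c Hc). specialize (Hrb c Hc).
    set (D := Gdenom r h c) in *.
    assert (HDe : D = 2 + h c ^2 - 2 * r c * h c) by reflexivity.
    assert (Hhd : hd c = D - 1) by (unfold hd; lra).
    rewrite Hhd.
    set (N := (2 * (D - 1) * D - (2 * h c * (D - 1) - 2 * (rd c * h c + r c * (D - 1))) * (2 * h c))).
    assert (HN : 0 <= D² - N).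
    { unfold N, Rsqr. rewrite HDe.
      assert (0 <= - rd c * h c * h c) by nra.
      assert (0 < 1 + h c ^2 - 2 * r c * h c) by nra.
      assert (0 <= h c ^ 2 * (1 + h c ^2 - 2 * r c * h c)) by (apply Rmult_le_pos; [apply pow2_ge_0|lra]).
      nra. }
    replace (1 - N / D²) with ((D² - N) * / D²) by (field; try (unfold Rsqr); try (apply Rmult_integral_contrapositive_currified); lra).
    apply Rmult_le_pos. exact HN. left. apply Rinv_0_lt_compat. unfold Rsqr. nra. }
  assert (Gmono : forall x y, zw < x < zw' -> zw < y < zw' -> x <= y -> Gmap r h x <= Gmap r h y).
  { intros x y Hx Hy Hxy. destruct Hxy as [Hxy|<-]; [|lra].
    destruct (MVT_cor2 (Gmap r h) Gd x y Hxy) as [c [Hc1 Hc2]].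
    { intros c Hc. apply HGd. lra. }
    assert (0 <= Gd c) by (apply HGd0; lra). assert (0 <= Gd c * (y - x)) by (apply Rmult_le_pos; lra). lra. }
  assert (hpos : forall z, zw < z < zw' -> zs < z -> 0 < h z).
  { intros z Hz Hlt.
    destruct (MVT_cor2 h hd zs z Hlt) as [c [Hc1 Hc2]].
    { intros c Hc. apply Hh. lra. }
    assert (Hrc := Hrb c ltac:(lra)). assert (0 < hd c) by (apply quad_pos; exact Hrc).
    rewrite Hhzs in Hc1. assert (0 < hd c * (z - zs)) by (apply Rmult_lt_0_compat; lra). lra. }
  assert (hneg : forall z, zw < z < zw' -> z < zs -> h z < 0).
  { intros z Hz Hlt.
    destruct (MVT_cor2 h hd z zs Hlt) as [c [Hc1 Hc2]].
    { intros c Hc. apply Hh. lra. }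
    assert (Hrc := Hrb c ltac:(lra)). assert (0 < hd c) by (apply quad_pos; exact Hrc).
    rewrite Hhzs in Hc1. assert (0 < hd c * (zs - z)) by (apply Rmult_lt_0_compat; lra). lra. }
  assert (Gzs : Gmap r h zs = zs).
  { unfold Gmap. rewrite Hhzs. unfold Rdiv. ring. }
  assert (Gle : forall z, zw < z < zw' -> zs <= z -> Gmap r h z <= z).
  { intros z Hz Hle. assert (0 <= h z) by (destruct Hle as [Hl|<-]; [left; apply hpos; auto| lra]).
    specialize (HD z Hz). unfold Gmap.
    assert (0 <= 2 * h z / Gdenom r h z) by (unfold Rdiv; apply Rmult_le_pos; [lra| left; apply Rinv_0_lt_compat; lra]).
    lra. }
  assert (Gge : forall z, zw < z < zw' -> z <= zs -> z <= Gmap r h z).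
  { intros z Hz Hle. assert (h z <= 0) by (destruct Hle as [Hl|Heq]; [left; apply hneg; auto| rewrite Heq; lra]).
    specialize (HD z Hz). unfold Gmap.
    assert (2 * h z / Gdenom r h z <= 0).
    { unfold Rdiv. assert (0 < / Gdenom r h z) by (apply Rinv_0_lt_compat; lra). nra. }
    lra. }
  set (u := Giter r h z0).
  assert (Hlim : forall L, Un_cv u L -> zw < L < zw' -> L = zs).
  { intros L HL HLJ.
    assert (Hc : continuity_pt (Gmap r h) L).
    { apply derivable_continuous_pt. exists (Gd L). apply HGd; exact HLJ. }
    assert (H1 := continuity_seq _ _ _ Hc HL).
    assert (H2 : Un_cv (fun n => u (S n)) L).
    { replace (fun n => u (S n)) with (fun n => u (n + 1)%nat).
      apply CV_shift'; exact HL. extensionality n. f_equal. lia. }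
    assert (HGL : Gmap r h L = L) by (exact (UL_sequence _ _ _ H1 H2)).
    apply Huniq; [exact HLJ|].
    unfold Gmap in HGL. specialize (HD L HLJ).
    assert (Hq : 2 * h L / Gdenom r h L = 0) by lra.
    unfold Rdiv in Hq. apply Rmult_integral in Hq. destruct Hq as [Hq|Hq].
    - lra.
    - exfalso. apply (Rinv_neq_0_compat (Gdenom r h L)). lra. exact Hq. }
  destruct (Rle_dec zs z0) as [Hge|Hlt].
  - assert (Hb : forall n, zs <= u n <= z0).
    { induction n as [|n IH]. change (u 0%nat) with z0. lra.
      change (u (S n)) with (Gmap r h (u n)).
      assert (HJ : zw < u n < zw') by lra.
      split. rewrite <- Gzs. apply Gmono; lra. assert (Gmap r h (u n) <= u n) by (apply Gle; lra). lra. }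
    assert (Hdecr : Un_decreasing u).
    { intros n. change (u (S n)) with (Gmap r h (u n)). apply Gle. specialize (Hb n); lra. apply Hb. }
    split; [|split].
    + intros n. specialize (Hb n). assert (zw < u n < zw') by lra. split. exact H. specialize (HD _ H). lra.
    + right; exact Hdecr.
    + destruct (decreasing_cv u Hdecr) as [L HL].
      { exists (- zs). intros x [i ->]. unfold opp_seq. specialize (Hb i). lra. }
      assert (L <= z0) by (exact (decreasing_ineq u L Hdecr HL 0%nat)).
      assert (zs <= L) by (apply (Rle_cv_lim (Un := fun _ => zs) (Vn := u)); [intro n; apply Hb | apply cv_const | exact HL]).
      rewrite <- (Hlim L HL) by lra. exact HL.
  - assert (Hb : forall n, z0 <= u n <= zs).
    { induction n as [|n IH]. change (u 0%nat) with z0. lra.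
      change (u (S n)) with (Gmap r h (u n)).
      assert (HJ : zw < u n < zw') by lra.
      split. assert (u n <= Gmap r h (u n)) by (apply Gge; lra). lra. rewrite <- Gzs. apply Gmono; lra. }
    assert (Hgr : Un_growing u).
    { intros n. change (u (S n)) with (Gmap r h (u n)). apply Gge. specialize (Hb n); lra. apply Hb. }
    split; [|split].
    + intros n. specialize (Hb n). assert (zw < u n < zw') by lra. split. exact H. specialize (HD _ H). lra.
    + left; exact Hgr.
    + destruct (growing_cv u Hgr) as [L HL].
      { exists zs. intros x [i ->]. specialize (Hb i). lra. }
      assert (z0 <= L) by (exact (growing_ineq u L Hgr HL 0%nat)).
      assert (L <= zs) by (apply (Rle_cv_lim (Un := u) (Vn := fun _ => zs)); [intro n; apply Hb | exact HL | apply cv_const]).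
      rewrite <- (Hlim L HL) by lra. exact HL.
Qed.
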